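(* In the homogeneous case $\rho(du|s)=\rho(du)$ with $\Lambda_0(t)=t$, suppose that given $(\mathbf m,\mathbf p)$ the ordered distinct times $T_{(1:n)}>\dots>T_{(n(\mathbf p):n)}$ have joint density (with respect to Lebesgue measure on $\{t_1>\dots>t_{n(\mathbf p)}>0\}$) $$\Big[\prod_{j=1}^{n(\mathbf p)}\phi(r_j)\Big]\prod_{j=1}^{n(\mathbf p)}e^{-\psi_{m_j,r_{j-1}}t_j}.$$ Then, conditionally on $T_{(j+1:n)},\dots,T_{(n(\mathbf p):n)}$, the distribution of $T_{(j:n)}$ depends only on $T_{(j+1:n)}=t_{j+1}$ and is the truncated exponential distribution $$\mathbb P(T_{(j:n)}\in dt_j\mid T_{(j+1:n)}=t_{j+1})=\phi(r_j)e^{-\phi(r_j)(t_j-t_{j+1})}dt_j,\qquad t_j>t_{j+1}.$$ In particular the smallest value $T_{(n(\mathbf p):n)}$ has density $\phi(n)e^{-\phi(n)y}$, $y>0$.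
   Context: $\rho(du)$ is a Lévy measure on $[0,1]$ with $\int_0^1u\rho(du)=1$. $\mathbf p$ is a partition of $\{1,\dots,n\}$ into $n(\mathbf p)$ blocks, $\mathbf m=(E_{(1)},\dots,E_{(n(\mathbf p))})$ an ordering of its blocks, $m_j=|E_{(j)}|$, $r_0=0$, $r_j=\sum_{l\le j}m_l$ (so $r_{n(\mathbf p)}=n$). $\phi(\omega)=\int_0^1(1-(1-u)^\omega)\rho(du)$ and $\psi_{i,k}=\int_0^1(1-(1-u)^i)(1-u)^k\rho(du)$. (This density is the homogeneous conditional law of the ordered distinct death times given $(\mathbf m,\mathbf p)$ for a sample from a spatial NTR process with hazard $\Lambda_0(t)=t$.) *)

(* Defs.v *)
From mathcomp Require Import all_boot all_order all_algebra.
From mathcomp Require Import all_classical all_reals all_analysis.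
Set Implicit Arguments. Unset Strict Implicit. Unset Printing Implicit Defensive.
Import Order.TTheory GRing.Theory Num.Theory.
Local Open Scope classical_set_scope.
Local Open Scope ring_scope.

Section NTR.
Context {R : realType}.
Variable rho : {measure set R -> \bar R}.

Definition phi (w : nat) : R :=
  Rintegral rho `[0%R, 1%R] (fun u => 1 - (1 - u) ^+ w).

Definition psi (i k : nat) : R :=
  Rintegral rho `[0%R, 1%R] (fun u => (1 - (1 - u) ^+ i) * (1 - u) ^+ k).

Variable n : nat.
(* E = (E_(1), ..., E_(n(p))) : an ordering of the blocks, 0-indexed *)
Variable E : seq {set 'I_n}.

Definition npb : nat := size E.
Definition msz (j : nat) : nat := #|nth (finset.set0 : {set 'I_n}) E j|.      (* m_{j+1} *)
Definition rsum (j : nat) : nat := (\sum_(l < j) msz l)%N.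

(* Times are encoded as t : nat -> R, with t i standing for t_{i+1}.
   tnext t i = t_{i+2} if i+2 <= n(p), and 0 otherwise. *)
Definition tnext (t : nat -> R) (i : nat) : R :=
  if (i.+1 < npb)%N then t i.+1 else 0.

Definition ordered_from (j : nat) (t : nat -> R) : bool :=
  [forall i : 'I_npb, (j <= i)%N ==> (tnext t i < t i)].

Definition joint_density (t : nat -> R) : R :=
  if ordered_from 0 t then
    (\prod_(j < npb) phi (rsum j.+1)) *
    \prod_(j < npb) expR (- (psi (msz j) (rsum j) * t j))
  else 0.

Definition setc (t : nat -> R) (j : nat) (x : R) : nat -> R :=
  fun i => if i == j then x else t i.

(* marg j t = marginal density of (T_(j+1:n), ..., T_(n(p):n)) at
   (t j, ..., t (n(p)-1)), obtained by integrating out the first j times. *)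
Fixpoint marg (j : nat) (t : nat -> R) : \bar R :=
  match j with
  | 0 => (joint_density t)%:E
  | j'.+1 => (\int[lebesgue_measure]_(x in [set: R]) marg j' (setc t j' x))%E
  end.

(* claimed conditional density of T_(j+1:n) given T_(j+2:n) = t_{j+2}
   (0-indexed j; t_{n(p)+1} := 0) *)
Definition cond_dens (j : nat) (t : nat -> R) : R :=
  if tnext t j < t j then
    phi (rsum j.+1) * expR (- (phi (rsum j.+1) * (t j - tnext t j)))
  else 0.

End NTR.

(* Main.v *)
Require Import Defs.
From mathcomp Require Import all_boot all_order all_algebra.
From mathcomp Require Import all_classical all_reals all_analysis.
From mathcomp Require Import measurable_realfun ring lra.
Import Order.TTheory GRing.Theory Num.Theory.
Import numFieldTopology.Exports.
Local Open Scope classical_set_scope.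
Local Open Scope ring_scope.

Section Ord.
Context {R : realType} (n : nat) (E : seq {set 'I_n}).

Lemma ord_split j (t : nat -> R) : ordered_from E j t =
  ((j < npb E)%N ==> (tnext E t j < t j)) && ordered_from E j.+1 t.
Proof.
apply/idP/idP.
  move/forallP => H; apply/andP; split.
    apply/implyP => jN; have := H (Ordinal jN); by rewrite leqnn.
  apply/forallP => i; apply/implyP => ji; have := H i.
  by rewrite (ltnW ji).
case/andP => /implyP h1 /forallP h2; apply/forallP => i; apply/implyP.
rewrite leq_eqVlt => /orP[/eqP ji|ji].
  by rewrite -ji; apply: h1; rewrite ji.
by have := h2 i; rewrite ji.
Qed.

Lemma ord_local j (t t' : nat -> R) : (forall i, (j <= i)%N -> t i = t' i) ->
  ordered_from E j t = ordered_from E j t'.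
Proof.
move=> h; apply: eq_forallb => i.
case: (boolP (j <= i)%N) => ji //=.
rewrite /tnext (h i ji); case: ifP => // _.
by rewrite h // (leq_trans ji).
Qed.

Lemma ord_top (t : nat -> R) : ordered_from E (npb E) t.
Proof.
by apply/forallP => i; rewrite leqNgt ltn_ord.
Qed.

End Ord.

Section Comb.
Context (n : nat) (P : {set {set 'I_n}}) (hP : finset.partition P [set: 'I_n])
  (E : seq {set 'I_n}) (hE : perm_eq E (enum P)).

Lemma rsumS k : rsum E k.+1 = (rsum E k + msz E k)%N.
Proof. by rewrite /rsum big_ord_recr. Qed.

Lemma msz_pos k : (k < npb E)%N -> (0 < msz E k)%N.
Proof.
move=> kN; rewrite /msz card_gt0.
have : nth finset.set0 E k \in P.
  by rewrite -mem_enum -(perm_mem hE) mem_nth.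
apply: contraL => /eqP ->.
by case/and3P: hP.
Qed.

Lemma rsum_pos k : (0 < k)%N -> (k <= npb E)%N -> (0 < rsum E k)%N.
Proof.
case: k => // k _ kN; rewrite rsumS.
by rewrite addn_gt0 msz_pos ?orbT.
Qed.

Lemma rsum_npb : rsum E (npb E) = n.
Proof.
rewrite /rsum /msz /npb.
rewrite -(big_mkord xpredT (fun l => #|nth finset.set0 E l|)).
rewrite -(big_nth finset.set0 xpredT (fun B => #|B|)).
rewrite (perm_big _ hE) /= big_enum /=.
by rewrite -(card_partition hP) cardsT card_ord.
Qed.

End Comb.
Section Phi.
Context {R : realType} (rho : {measure set R -> \bar R}).
Hypothesis hmean : (\int[rho]_(u in `[0%R, 1%R]%classic) u%:E = 1)%E.

Let I : set R := `[0%R, 1%R].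
Let mI : measurable I. Proof. exact: measurable_itv. Qed.

Lemma inI u : I u -> 0 <= u <= 1.
Proof. by rewrite /I /= in_itv. Qed.

Lemma bern (w : nat) (u : R) : 0 <= u <= 1 -> 0 <= 1 - (1 - u) ^+ w <= w%:R * u.
Proof.
move=> /andP[u0 u1]; elim: w => [|w /andP[IH1 IH2]].
  by rewrite expr0 subrr mul0r lexx.
have h0 : 0 <= 1 - u by lra.
have h1 : 1 - u <= 1 by lra.
have hp : 0 <= (1 - u) ^+ w by exact: exprn_ge0.
have hq : (1 - u) ^+ w <= 1 by apply: exprn_ile1; lra.
rewrite exprS -natr1; apply/andP; split; nra.
Qed.

Lemma int_u : rho.-integrable I (EFin \o id).
Proof.
apply/integrableP; split.
  by apply/measurable_EFinP; exact: measurable_id.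
have -> : (\int[rho]_(x in I) `|(EFin \o id) x|)%E = (\int[rho]_(x in I) x%:E)%E.
  apply: eq_integral => u; rewrite inE => /inI /andP[u0 _] /=.
  by rewrite ger0_norm.
by rewrite /I hmean ltry.
Qed.

Lemma int_bnd (f : R -> R) (w : nat) : measurable_fun I f ->
  (forall u, I u -> 0 <= f u <= w%:R * u) -> rho.-integrable I (EFin \o f).
Proof.
move=> mf hf.
apply: (le_integrable mI _ _ (integrableZl mI w%:R int_u)).
  by apply/measurable_EFinP.
move=> u /[dup] /inI /andP[u0 u1] /hf /andP[f0 f1] /=.
rewrite lee_fin !ger0_norm //; exact: mulr_ge0.
Qed.

Lemma mpow (w : nat) : measurable_fun I (fun u : R => (1 - u) ^+ w).
Proof.
apply: measurable_funX; apply: measurable_funB; [exact: measurable_cst | exact: measurable_id].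
Qed.

Lemma int_g (w : nat) : rho.-integrable I (EFin \o (fun u => 1 - (1 - u) ^+ w)).
Proof.
apply: (@int_bnd _ w).
  by apply: measurable_funB; [exact: measurable_cst | exact: mpow].
by move=> u /inI; exact: bern.
Qed.

Lemma int_h (m r : nat) : rho.-integrable I (EFin \o (fun u => (1 - (1 - u) ^+ m) * (1 - u) ^+ r)).
Proof.
apply: (@int_bnd _ m).
  apply: measurable_funM; last exact: mpow.
  by apply: measurable_funB; [exact: measurable_cst | exact: mpow].
move=> u /inI /[dup] /andP[u0 u1] /(bern m) /andP[g0 g1].
have hp : 0 <= (1 - u) ^+ r by apply: exprn_ge0; lra.
have hq : (1 - u) ^+ r <= 1 by apply: exprn_ile1; lra.
apply/andP; split; first exact: mulr_ge0.
apply: le_trans g1; rewrite -[X in _ <= X]mulr1; exact: ler_wpM2l.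
Qed.

Lemma phi0 : phi rho 0 = 0.
Proof.
rewrite /phi; under eq_Rintegral do rewrite expr0 subrr.
by rewrite /Rintegral integral0.
Qed.

Lemma phiD r m : phi rho (r + m) = phi rho r + psi rho m r.
Proof.
rewrite /phi /psi -RintegralD //; last exact: int_h.
  by apply: eq_Rintegral => u _; rewrite exprD; ring.
exact: int_g.
Qed.

Lemma phi_ge1 r : (0 < r)%N -> 1 <= phi rho r.
Proof.
move=> r0.
have -> : 1 = Rintegral rho I id by rewrite /Rintegral hmean.
apply: le_Rintegral => //; [exact: int_u | exact: int_g|].
move=> u /inI /andP[u0 u1] /=.
case: r r0 => // r _.
have h0 : 0 <= 1 - u by lra.
have hq : (1 - u) ^+ r <= 1 by apply: exprn_ile1; lra.
rewrite exprS.
have : (1 - u) * (1 - u) ^+ r <= (1 - u) * 1 by exact: ler_wpM2l.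
lra.
Qed.

End Phi.
Section A.
Context {R : realType}.

Lemma isd_lin (c x : R) : is_derive x 1 (fun x : R => - (c * x)) (- c).
Proof.
have h : is_derive x (1:R) (fun x : R => c * x) c.
  have := @is_deriveZ R R^o R^o id c x 1 1 (is_derive_id _ _).
  by rewrite /GRing.scale /= mulr1.
have := is_deriveN h. by [].
Qed.

Lemma isd_F (K c x : R) :
  is_derive x 1 (fun x => - (K / c) * expR (- (c * x))) (- (K / c) * (expR (- (c * x)) * (- c))).
Proof.
have h := @is_derive1_comp R expR (fun x => - (c * x)) x _ _ (is_derive_expR _) (isd_lin c x).
have := @is_deriveZ R R^o R^o _ (- (K / c)) x 1 _ h.
by [].
Qed.

Lemma cont_E (K c : R) : continuous (fun x : R => K * expR (- (c * x))).
Proof.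
move=> x.
apply: (@continuousM _ R^o (fun=> K) (fun x => expR (- (c * x)))).
  exact: cst_continuous.
apply: continuous_comp; last exact: continuous_expR.
apply: (@continuousN _ R^o).
by apply: continuousM => //; exact: cst_continuous.
Qed.

Lemma exp_tail (a c K : R) : 0 < c -> 0 <= K ->
  (\int[lebesgue_measure]_(x in [set: R]) (if a < x then K * expR (- (c * x)) else 0)%:E
   = (K * expR (- (c * a)) / c)%:E)%E.
Proof.
move=> c0 K0.
set f := fun x : R => K * expR (- (c * x)).
have cf : continuous f by exact: cont_E.
have -> : (\int[lebesgue_measure]_(x in [set: R]) (if a < x then K * expR (- (c * x)) else 0)%:E
   = \int[lebesgue_measure]_(x in `]a, +oo[) (f x)%:E)%E.
  rewrite [RHS]integral_mkcond; apply: eq_integral => x _; rewrite patchE.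
  rewrite (_ : (x \in _) = (a < x)); last first.
    by apply/idP/idP; rewrite in_setE /= in_itv /= andbT.
  by case: ifP.
rewrite integral_itv_obnd_cbnd; last first.
  apply/measurable_realfun.measurable_EFinP; apply: measurable_funTS.
  exact: continuous_measurable_fun.
set F := fun x => - (K / c) * expR (- (c * x)).
rewrite (@ge0_continuous_FTC2y R f F a 0).
- rewrite /F -EFinB sub0r mulNr opprK; congr (_%:E).
  by rewrite mulrAC.
- by move=> x _; rewrite /f mulr_ge0 // expR_ge0.
- exact: continuous_subspaceT.
- rewrite (_ : 0 = - (K / c) * 0); last by rewrite mulr0.
  apply: cvgMl_tmp.
  rewrite (_ : (fun x => expR (- (c * x))) =
               (fun z => expR (- z)) \o (fun z => c * z)); last first.
    by apply: funext => x.
  apply: (@cvg_comp _ _ _ _ _ _ (pinfty_nbhs R)); last exact: cvgr_expR.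
  exact: gt0_cvgMry.
- move=> x _; exact: (@ex_derive _ _ _ _ _ _ _ (isd_F K c x)).
- by apply: cvg_at_right_filter; exact: cont_E.
- move=> x _; rewrite derive1E (@derive_val _ _ _ _ _ _ _ (isd_F K c x)) /f.
  have cn : c != 0 by rewrite gt_eqF.
  by field.
Qed.

End A.

Section Main.
Context {R : realType} (rho : {measure set R -> \bar R}) (n : nat) (E : seq {set 'I_n}).

Let Phi k := phi rho (rsum E k).
Let N := npb E.
Let ps i := psi rho (msz E i) (rsum E i).

Hypothesis hPhi : forall k, (0 < k)%N -> (k <= N)%N -> 0 < Phi k.
Hypothesis hPhiD : forall k, (k < N)%N -> Phi k.+1 = Phi k + ps k.
Hypothesis hPhi0 : Phi 0 = 0.

Definition sv j (t : nat -> R) := if (j < N)%N then t j else 0.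

Definition G j (t : nat -> R) : R :=
  if ordered_from E j t then
    (\prod_(j <= k < N) Phi k.+1) * expR (- (Phi j * sv j t)) *
    \prod_(j <= i < N) expR (- (ps i * t i))
  else 0.

Lemma Pprod_gt0 j : 0 < \prod_(j <= k < N) Phi k.+1.
Proof.
rewrite big_seq_cond; apply: prodr_gt0 => k /andP[]; rewrite mem_index_iota.
by case/andP => _ kN _; apply: hPhi.
Qed.

Lemma Qprod_gt0 j (t : nat -> R) : 0 < \prod_(j <= i < N) expR (- (ps i * t i)).
Proof. by apply: prodr_gt0 => i _; exact: expR_gt0. Qed.

Lemma G_split j (t : nat -> R) : (j < N)%N ->
  G j t = if (tnext E t j < t j) && ordered_from E j.+1 t then
    (Phi j.+1 * \prod_(j.+1 <= k < N) Phi k.+1) *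
    \prod_(j.+1 <= i < N) expR (- (ps i * t i)) * expR (- (Phi j.+1 * t j))
  else 0.
Proof.
move=> jN; rewrite /G ord_split jN /=; case: ifP => // _.
rewrite /sv jN (big_ltn jN) (big_ltn jN) hPhiD //.
have -> : expR (- ((Phi j + ps j) * t j)) = expR (- (Phi j * t j)) * expR (- (ps j * t j)).
  by rewrite -expRD; congr expR; ring.
ring.
Qed.

Lemma setc_ord j (t : nat -> R) x : (j < N)%N ->
  ordered_from E j (setc t j x) = (tnext E t j < x) && ordered_from E j.+1 t.
Proof.
move=> jN; rewrite ord_split jN /=.
rewrite (@ord_local _ _ _ _ _ t); last first.
  by move=> i ji; rewrite /setc (gtn_eqF ji).
congr (_ && _).
rewrite /setc eqxx /tnext; case: ifP => // _.
by rewrite (gtn_eqF (ltnSn j)).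
Qed.

Lemma G_setc j (t : nat -> R) x : (j < N)%N ->
  G j (setc t j x) = if ordered_from E j.+1 t then
    (if tnext E t j < x then
      (Phi j.+1 * \prod_(j.+1 <= k < N) Phi k.+1) *
      \prod_(j.+1 <= i < N) expR (- (ps i * t i)) * expR (- (Phi j.+1 * x))
     else 0)
  else 0.
Proof.
move=> jN; rewrite G_split //.
have -> : tnext E (setc t j x) j = tnext E t j.
  rewrite /tnext; case: ifP => // _.
  by rewrite /setc (gtn_eqF (ltnSn j)).
rewrite (@ord_local _ _ _ _ (setc t j x) t); last first.
  by move=> i ji; rewrite /setc (gtn_eqF ji).
have -> : setc t j x j = x by rewrite /setc eqxx.
have -> : \prod_(j.+1 <= i < N) expR (- (ps i * setc t j x i)) =
    \prod_(j.+1 <= i < N) expR (- (ps i * t i)).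
  by apply: eq_big_nat => i /andP[ji _]; rewrite /setc (gtn_eqF ji).
by case: (ordered_from E j.+1 t); rewrite ?andbT ?andbF //.
Qed.

Lemma marg_G j : (j <= N)%N -> forall t, marg rho E j t = (G j t)%:E.
Proof.
elim: j => [_ t|j IH jN t].
  rewrite /= /joint_density /G; case: ifP => // _.
  rewrite hPhi0 mul0r oppr0 expR0 mulr1 !big_mkord.
  done.
have jN' : (j < N)%N by exact: jN.
rewrite /=.
under eq_integral => x _ do rewrite IH ?(ltnW jN) // G_setc //.
have Phi_gt0 : 0 < Phi j.+1 by apply: hPhi.
case: (boolP (ordered_from E j.+1 t)) => ot; last first.
  by rewrite integral0 /G (negbTE ot).
rewrite exp_tail //; last first.
  apply: mulr_ge0; [apply: mulr_ge0|]; apply: ltW.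
  - exact: Phi_gt0.
  - exact: Pprod_gt0.
  - exact: Qprod_gt0.
rewrite /G ot /sv /tnext; congr (_%:E).
have cn : Phi j.+1 != 0 by rewrite gt_eqF.
by case: ifP => _; move: (Phi j.+1) cn => c cn; field.
Qed.

End Main.

Theorem proposition5p2 (R : realType) (rho : {measure set R -> \bar R})
  (hsupp : rho (~` `[0%R, 1%R])%classic = 0%E)
  (hmean : (\int[rho]_(u in `[0%R, 1%R]%classic) u%:E = 1)%E)
  (n : nat) (P : {set {set 'I_n}}) (hP : finset.partition P [set: 'I_n])
  (E : seq {set 'I_n}) (hE : perm_eq E (enum P)) :
  (forall (j : nat) (t : nat -> R), (j < npb E)%N -> ordered_from E j.+1 t ->
     ((0 < marg rho E j.+1 t)%E /\ (marg rho E j.+1 t < +oo)%E) /\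
     marg rho E j t = ((cond_dens rho E j t)%:E * marg rho E j.+1 t)%E)
  /\
  (forall (t : nat -> R), (0 < npb E)%N -> 0 < t (npb E).-1 ->
     marg rho E (npb E).-1 t =
       (phi rho n * expR (- (phi rho n * t (npb E).-1)))%:E).
Proof.
have hPhi : forall k, (0 < k)%N -> (k <= npb E)%N -> 0 < phi rho (rsum E k).
  move=> k k0 kN; apply: (lt_le_trans ltr01); apply: phi_ge1 => //.
  exact: (@rsum_pos n P hP E hE k).
have hPhiD : forall k, (k < npb E)%N ->
    phi rho (rsum E k.+1) = phi rho (rsum E k) + psi rho (msz E k) (rsum E k).
  by move=> k _; rewrite rsumS phiD.
have hPhi0 : phi rho (rsum E 0) = 0.
  by rewrite /rsum big_ord0 phi0.
have MG := @marg_G R rho n E hPhi hPhiD hPhi0.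
split.
  move=> j t jN ot.
  rewrite !MG ?(ltnW jN) //; split.
    split; last exact: ltry.
    rewrite lte_fin /G ot; apply: mulr_gt0; last exact: Qprod_gt0.
    by apply: mulr_gt0; [exact: (@Pprod_gt0 R rho n E hPhi) | exact: expR_gt0].
  rewrite (@G_split R rho n E hPhiD) // ot andbT /cond_dens /G ot /sv /tnext.
  case: ifP => _; last by rewrite mul0e.
  rewrite -EFinM; congr _%:E.
  set a := (if _ then _ else _).
  set c := phi rho (rsum E j.+1).
  have -> : expR (- (c * t j)) = expR (- (c * (t j - a))) * expR (- (c * a)).
    by rewrite -expRD; congr expR; ring.
  ring.
move=> t N0 tpos.
have NN : ((npb E).-1 < npb E)%N by rewrite ltn_predL.
rewrite MG ?leq_pred // (@G_split R rho n E hPhiD) //.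
rewrite prednK // ord_top andbT /tnext prednK // ltnn tpos.
rewrite !big_geq // (@rsum_npb n P hP E hE).
congr _%:E; ring.
Qed.
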